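(* Let $P$ be a path linkage with $k\ge2$ edges, all of positive length. Let $p\in M(P)$ and let $\alpha:[0,1]\to[P]$ be continuous with $\alpha(0)=\theta(p)$. Then there exists a continuous $\tilde\alpha:[0,1]\to M(P)$ with $\tilde\alpha(0)=p$ and $\theta\circ\tilde\alpha=\alpha$.
   Context: A path linkage is a linkage $P=(G,l)$ where $G$ is a path graph with vertices $1,\dots,k+1$ and edges $\{i,i+1\}$; its terminal vertices are $s=1$, $t=k+1$. $C(P)=\{p:V\to\mathbb R^2:|p(u)-p(v)|=l(\{u,v\})\text{ for every edge}\}$, and $M(P)$ is the quotient of $C(P)$ by the group of orientation preserving isometries of $\mathbb R^2$, with the quotient topology. $\theta:M(P)\to\mathbb R$, $\theta(p)=|p(s)-p(t)|$, and $[P]=\theta(M(P))$. *)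

(* Defs.v *)
From Stdlib Require Import Reals.
Open Scope R_scope.

Definition pt := (R * R)%type.
Definition dist2 (x y : pt) : R :=
  sqrt ((fst x - fst y) ^ 2 + (snd x - snd y) ^ 2).

(* A path linkage with k edges: vertices 0..k (paper: 1..k+1), edges {i,i+1}
   for i < k with length l i.  A placement is a map nat -> pt; only the values
   at 0..k are relevant. *)
Definition config := nat -> pt.

Definition inC (k : nat) (l : nat -> R) (p : config) : Prop :=
  forall i, (i < k)%nat -> dist2 (p i) (p (S i)) = l i.

Definition se2_act (c s b1 b2 : R) (x : pt) : pt :=
  (c * fst x - s * snd x + b1, s * fst x + c * snd x + b2).

(* p and q define the same point of M(P) *)
Definition congruent (k : nat) (p q : config) : Prop :=
  exists c s b1 b2, c ^ 2 + s ^ 2 = 1 /\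
    forall i, (i <= k)%nat -> q i = se2_act c s b1 b2 (p i).

Definition theta (k : nat) (p : config) : R := dist2 (p 0%nat) (p k).

Definition range_P (k : nat) (l : nat -> R) (r : R) : Prop :=
  exists q, inC k l q /\ theta k q = r.

(* U is an open subset of C(P) (subspace topology from (R^2)^(k+1)) *)
Definition openC (k : nat) (l : nat -> R) (U : config -> Prop) : Prop :=
  forall p, inC k l p -> U p -> exists eps, 0 < eps /\
    forall q, inC k l q -> (forall i, (i <= k)%nat -> dist2 (p i) (q i) < eps) -> U q.

Definition saturated (k : nat) (U : config -> Prop) : Prop :=
  forall p q, congruent k p q -> U p -> U q.

Definition open01 (A : R -> Prop) : Prop :=
  forall t, 0 <= t <= 1 -> A t -> exists d, 0 < d /\
    forall u, 0 <= u <= 1 -> Rabs (u - t) < d -> A u.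

Definition cont01 (f : R -> R) : Prop :=
  forall t, 0 <= t <= 1 -> forall eps, 0 < eps -> exists d, 0 < d /\
    forall u, 0 <= u <= 1 -> Rabs (u - t) < d -> Rabs (f u - f t) < eps.

(* A path [0,1] -> M(P), given by representatives f t in C(P), is continuous
   for the quotient topology: open sets of M(P) are exactly the images of
   saturated open subsets of C(P). *)
Definition contM (k : nat) (l : nat -> R) (f : R -> config) : Prop :=
  (forall t, 0 <= t <= 1 -> inC k l (f t)) /\
  forall U, openC k l U -> saturated k U -> open01 (fun t => U (f t)).

(* Main.v *)
Require Import Defs.
From Stdlib Require Import Reals.
From Stdlib Require Import Lra Lia Psatz Classical.
Open Scope R_scope.

Definition D01 (u : R) : Prop := 0 <= u <= 1.

Lemma cont01_lim (f : R -> R) : cont01 f <-> forall t, D01 t -> limit1_in f D01 (f t) t.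
Proof.
  unfold cont01, limit1_in, limit_in, D01; simpl; unfold Rdist; split.
  - intros H t Ht eps He. destruct (H t Ht eps He) as [d [Hd H']].
    exists d; split; [lra|]. intros x [Hx Hx']. apply H'; auto.
  - intros H t Ht eps He. destruct (H t Ht eps He) as [d [Hd H']].
    exists d; split; [lra|]. intros x Hx Hx'. apply H'; auto.
Qed.

Lemma c01_ext f g : (forall t, f t = g t) -> cont01 f -> cont01 g.
Proof. intros E H t Ht eps He. destruct (H t Ht eps He) as [d [Hd H']].
  exists d; split; auto. intros u Hu Hut. rewrite <- !E. auto. Qed.

Lemma c01_const c : cont01 (fun _ => c).
Proof. intros t Ht eps He; exists 1; split; [lra|]. intros; unfold Rminus; rewrite Rplus_opp_r, Rabs_R0; lra. Qed.

Lemma c01_id : cont01 (fun t => t).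
Proof. intros t Ht eps He; exists eps; split; [lra|]. intros; auto. Qed.

Lemma c01_plus f g : cont01 f -> cont01 g -> cont01 (fun t => f t + g t).
Proof. rewrite !cont01_lim; intros. apply limit_plus; auto. Qed.
Lemma c01_opp f : cont01 f -> cont01 (fun t => - f t).
Proof. rewrite !cont01_lim; intros. apply limit_Ropp; auto. Qed.
Lemma c01_minus f g : cont01 f -> cont01 g -> cont01 (fun t => f t - g t).
Proof. rewrite !cont01_lim; intros. apply limit_minus; auto. Qed.
Lemma c01_mult f g : cont01 f -> cont01 g -> cont01 (fun t => f t * g t).
Proof. rewrite !cont01_lim; intros. apply limit_mul; auto. Qed.
Lemma c01_inv f : cont01 f -> (forall t, D01 t -> f t <> 0) -> cont01 (fun t => / f t).
Proof. rewrite !cont01_lim; intros. apply limit_inv; auto. Qed.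
Lemma c01_div f g : cont01 f -> cont01 g -> (forall t, D01 t -> g t <> 0) -> cont01 (fun t => f t / g t).
Proof. intros. unfold Rdiv. apply c01_mult; auto. apply c01_inv; auto. Qed.

Lemma c01_comp (g f : R -> R) : cont01 f -> (forall t, D01 t -> continuity_pt g (f t)) ->
  cont01 (fun t => g (f t)).
Proof.
  intros Hf Hg t Ht eps He.
  specialize (Hg t Ht). unfold continuity_pt, continue_in, limit1_in, limit_in in Hg; simpl in Hg; unfold Rdist in Hg.
  destruct (Hg eps He) as [d1 [Hd1 H1]].
  destruct (Hf t Ht d1 Hd1) as [d [Hd H2]].
  exists d; split; auto. intros u Hu Hut.
  destruct (Req_dec (f u) (f t)) as [E|E].
  - rewrite E; unfold Rminus; rewrite Rplus_opp_r, Rabs_R0; lra.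
  - apply H1. split. split. exact I. auto. apply H2; auto.
Qed.

Lemma c01_sqrt f : cont01 f -> (forall t, D01 t -> 0 <= f t) -> cont01 (fun t => sqrt (f t)).
Proof. intros. apply c01_comp; auto. intros. apply continuity_pt_sqrt; auto. Qed.

Lemma c01_abs f : cont01 f -> cont01 (fun t => Rabs (f t)).
Proof. intros. apply c01_comp; auto. intros. apply Rcontinuity_abs. Qed.

Lemma Rmax_alt a b : Rmax a b = (a + b + Rabs (a - b)) / 2.
Proof. unfold Rmax; destruct (Rle_dec a b); [rewrite Rabs_left1|rewrite Rabs_right]; lra. Qed.
Lemma Rmin_alt a b : Rmin a b = (a + b - Rabs (a - b)) / 2.
Proof. unfold Rmin; destruct (Rle_dec a b); [rewrite Rabs_left1|rewrite Rabs_right]; lra. Qed.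

Lemma c01_max f g : cont01 f -> cont01 g -> cont01 (fun t => Rmax (f t) (g t)).
Proof. intros. apply (c01_ext (fun t => (f t + g t + Rabs (f t - g t)) / 2)).
  intros; rewrite Rmax_alt; auto.
  apply c01_div; [|apply c01_const|intros; lra].
  apply c01_plus; [apply c01_plus; auto|]. apply c01_abs, c01_minus; auto. Qed.
Lemma c01_min f g : cont01 f -> cont01 g -> cont01 (fun t => Rmin (f t) (g t)).
Proof. intros. apply (c01_ext (fun t => (f t + g t - Rabs (f t - g t)) / 2)).
  intros; rewrite Rmin_alt; auto.
  apply c01_div; [|apply c01_const|intros; lra].
  apply c01_minus; [apply c01_plus; auto|]. apply c01_abs, c01_minus; auto. Qed.

Lemma c01_scal c f : cont01 f -> cont01 (fun t => c * f t).
Proof. intros; apply c01_mult; auto; apply c01_const. Qed.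

Definition vadd (u v : pt) : pt := (fst u + fst v, snd u + snd v).
Definition vsub (u v : pt) : pt := (fst u - fst v, snd u - snd v).
Definition vscal (k : R) (v : pt) : pt := (k * fst v, k * snd v).
Definition rot (c s : R) (v : pt) : pt := (c * fst v - s * snd v, s * fst v + c * snd v).
Definition dot (u v : pt) : R := fst u * fst v + snd u * snd v.
Definition cross (u v : pt) : R := fst u * snd v - snd u * fst v.
Definition nsq (v : pt) : R := fst v ^ 2 + snd v ^ 2.
Definition nrm (v : pt) : R := sqrt (nsq v).

Lemma dist2_nrm x y : dist2 x y = nrm (vsub y x).
Proof. unfold dist2, nrm, nsq, vsub; cbn [fst snd]. f_equal; ring. Qed.

Lemma nsq_nonneg v : 0 <= nsq v.
Proof. unfold nsq; nra. Qed.

Lemma nrm_nonneg v : 0 <= nrm v.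
Proof. apply sqrt_pos. Qed.

Lemma nrm_sq v : nrm v ^ 2 = nsq v.
Proof. unfold nrm. simpl. rewrite Rmult_1_r. apply sqrt_sqrt, nsq_nonneg. Qed.

Lemma nrm_eq v r : 0 <= r -> nsq v = r ^ 2 -> nrm v = r.
Proof. intros H E. unfold nrm. rewrite E. apply sqrt_pow2; auto. Qed.

Lemma nrm_eq_nsq u v : nsq u = nsq v -> nrm u = nrm v.
Proof. intros E; unfold nrm; rewrite E; auto. Qed.

Lemma sq_le_nrm a b : 0 <= b -> a ^ 2 <= b ^ 2 -> a <= b.
Proof. intros. nra. Qed.

Lemma nrm_tri u v : nrm (vadd u v) <= nrm u + nrm v.
Proof.
  apply sq_le_nrm. pose proof (nrm_nonneg u); pose proof (nrm_nonneg v); lra.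
  assert (E : (nrm u + nrm v) ^ 2 = nsq u + nsq v + 2 * nrm u * nrm v).
  { rewrite <- (nrm_sq u), <- (nrm_sq v). ring. }
  rewrite E, nrm_sq. unfold vadd, nsq; cbn [fst snd].
  assert (dot u v <= nrm u * nrm v).
  { apply sq_le_nrm. apply Rmult_le_pos; apply nrm_nonneg.
    rewrite Rpow_mult_distr, !nrm_sq. unfold dot, nsq. pose proof (pow2_ge_0 (fst u * snd v - snd u * fst v)). nra. }
  unfold dot in H. nra.
Qed.

Lemma nrm_tri_rev u v : Rabs (nrm u - nrm v) <= nrm (vadd u v).
Proof.
  assert (A : nrm u <= nrm (vadd u v) + nrm v).
  { replace u with (vadd (vadd u v) (vscal (-1) v)) at 1.
    2:{ unfold vadd, vscal; destruct u, v; cbn [fst snd]; f_equal; ring. }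
    eapply Rle_trans. apply nrm_tri. apply Rplus_le_compat_l.
    right. apply nrm_eq_nsq. unfold nsq, vscal; cbn [fst snd]; ring. }
  assert (B : nrm v <= nrm (vadd u v) + nrm u).
  { replace v with (vadd (vadd u v) (vscal (-1) u)) at 1.
    2:{ unfold vadd, vscal; destruct u, v; cbn [fst snd]; f_equal; ring. }
    eapply Rle_trans. apply nrm_tri. apply Rplus_le_compat_l.
    right. apply nrm_eq_nsq. unfold nsq, vscal; cbn [fst snd]; ring. }
  unfold Rabs; destruct (Rcase_abs _); lra.
Qed.

Lemma nsq_rot c s v : c ^ 2 + s ^ 2 = 1 -> nsq (rot c s v) = nsq v.
Proof. intros H. unfold nsq, rot; cbn [fst snd].
  replace ((c * fst v - s * snd v) ^ 2 + (s * fst v + c * snd v) ^ 2)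
    with ((c^2 + s^2) * (fst v ^ 2 + snd v ^ 2)) by ring. rewrite H; ring. Qed.

Lemma nrm_rot c s v : c ^ 2 + s ^ 2 = 1 -> nrm (rot c s v) = nrm v.
Proof. intros; apply nrm_eq_nsq, nsq_rot; auto. Qed.

Lemma rot_lin c s u v : rot c s (vsub u v) = vsub (rot c s u) (rot c s v).
Proof. unfold rot, vsub; cbn [fst snd]; f_equal; ring. Qed.

Lemma rot_id v : rot 1 0 v = v.
Proof. unfold rot; destruct v; cbn [fst snd]; f_equal; ring. Qed.

Lemma rot_scal c s k v : rot c s (vscal k v) = vscal k (rot c s v).
Proof. unfold rot, vscal; cbn [fst snd]; f_equal; ring. Qed.

Lemma nrm_pos_ne v : nrm v > 0 -> v <> (0,0).
Proof. intros H E. subst. unfold nrm, nsq in H; cbn [fst snd] in H.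
  replace (0 ^ 2 + 0 ^ 2) with 0 in H by ring. rewrite sqrt_0 in H. lra. Qed.

Lemma nrm_zero_eq v : nrm v = 0 -> v = (0,0).
Proof. intros H. assert (nsq v = 0). { rewrite <- nrm_sq, H. ring. }
  unfold nsq in H0. destruct v; simpl in *. f_equal; nra. Qed.

Definition pc (f : R -> pt) : Prop := cont01 (fun t => fst (f t)) /\ cont01 (fun t => snd (f t)).

Lemma pc_const v : pc (fun _ => v).
Proof. split; apply c01_const. Qed.
Lemma pc_add f g : pc f -> pc g -> pc (fun t => vadd (f t) (g t)).
Proof. intros [] []; split; cbn [fst snd]; apply c01_plus; auto. Qed.
Lemma pc_sub f g : pc f -> pc g -> pc (fun t => vsub (f t) (g t)).
Proof. intros [] []; split; cbn [fst snd]; apply c01_minus; auto. Qed.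
Lemma pc_scal k f : cont01 k -> pc f -> pc (fun t => vscal (k t) (f t)).
Proof. intros ? [] ; split; cbn [fst snd]; apply c01_mult; auto. Qed.
Lemma pc_rot c s f : cont01 c -> cont01 s -> pc f -> pc (fun t => rot (c t) (s t) (f t)).
Proof. intros ? ? [] ; split; cbn [fst snd].
  apply c01_minus; apply c01_mult; auto. apply c01_plus; apply c01_mult; auto. Qed.
Lemma c01_dot f g : pc f -> pc g -> cont01 (fun t => dot (f t) (g t)).
Proof. intros [] []; unfold dot; apply c01_plus; apply c01_mult; auto. Qed.
Lemma c01_cross f g : pc f -> pc g -> cont01 (fun t => cross (f t) (g t)).
Proof. intros [] []; unfold cross; apply c01_minus; apply c01_mult; auto. Qed.




Definition ccos (b L r : R) : R := (r ^ 2 - b ^ 2 - L ^ 2) / (2 * b * L).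

Lemma ccos_bound b L r : 0 < b -> 0 < L -> Rabs (b - L) <= r <= b + L ->
  -1 <= ccos b L r <= 1.
Proof.
  intros Hb HL [H1 H2]. unfold ccos.
  assert (0 <= r) by (pose proof (Rabs_pos (b - L)); lra).
  assert (Hr2 : (b - L) ^ 2 <= r ^ 2).
  { unfold Rabs in H1; destruct (Rcase_abs (b - L)); nra. }
  assert (0 < 2 * b * L) by nra.
  set (c := (r ^ 2 - b ^ 2 - L ^ 2) / (2 * b * L)).
  assert (E : c * (2 * b * L) = r ^ 2 - b ^ 2 - L ^ 2) by (unfold c; field; lra).
  assert (r ^ 2 <= (b + L) ^ 2) by nra.
  split; nra.
Qed.

Lemma sq_1m c : -1 <= c <= 1 -> 0 <= 1 - c ^ 2.
Proof. intros; nra. Qed.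

Lemma csq c : -1 <= c <= 1 -> c ^ 2 + sqrt (1 - c ^ 2) ^ 2 = 1.
Proof. intros H. rewrite <- Rsqr_pow2 with (x := sqrt _). rewrite Rsqr_sqrt by (apply sq_1m; auto). ring. Qed.

Lemma csq_sig c sg : -1 <= c <= 1 -> sg ^ 2 = 1 -> c ^ 2 + (sg * sqrt (1 - c ^ 2)) ^ 2 = 1.
Proof. intros H E. rewrite Rpow_mult_distr, E, Rmult_1_l. apply csq; auto. Qed.

Lemma place_nsq w b L r c s : nrm w = b -> 0 < b -> c ^ 2 + s ^ 2 = 1 -> c = ccos b L r -> 0 < L ->
  nsq (vadd w (vscal (L / b) (rot c s w))) = r ^ 2.
Proof.
  intros Hw Hb Hcs Hc HL.
  assert (Hn : nsq w = b ^ 2) by (rewrite <- Hw, nrm_sq; auto).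
  transitivity (nsq w * (1 + 2 * (L / b) * c + (L / b) ^ 2 * (c ^ 2 + s ^ 2))).
  { unfold nsq, vadd, vscal, rot; cbn [fst snd]. ring. }
  rewrite Hcs, Hn, Hc. unfold ccos. field. lra.
Qed.

Lemma place w b L r : nrm w = b -> 0 < L -> Rabs (b - L) <= r <= b + L ->
  exists e, nrm e = L /\ nrm (vadd w e) = r.
Proof.
  intros Hw HL Hr. pose proof (nrm_nonneg w) as Hb0. rewrite Hw in Hb0.
  assert (0 <= r) by (pose proof (Rabs_pos (b - L)); lra).
  destruct (Req_dec b 0) as [Hb|Hb].
  - subst b. assert (w = (0,0)) by (apply nrm_zero_eq; auto). subst w.
     rewrite Hb in Hr. rewrite Rminus_0_l, Rabs_Ropp, Rabs_right in Hr by lra.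
    exists (L, 0). split; apply nrm_eq; try lra; unfold nsq, vadd; cbn [fst snd]; assert (r = L) by lra; subst; ring.
  - assert (Hbp : 0 < b) by lra.
    pose proof (ccos_bound b L r Hbp HL Hr) as Hc.
    exists (vscal (L / b) (rot (ccos b L r) (sqrt (1 - ccos b L r ^ 2)) w)). split.
    + apply nrm_eq; [lra|]. unfold vscal. 
      transitivity ((L / b) ^ 2 * nsq (rot (ccos b L r) (sqrt (1 - ccos b L r ^ 2)) w)).
      { unfold nsq; cbn [fst snd]; ring. }
      rewrite nsq_rot by (apply csq; auto). rewrite <- nrm_sq, Hw. field. lra.
    + apply nrm_eq; auto. apply place_nsq; auto. apply csq; auto.
Qed.

Fixpoint Lsum (n : nat) (l : nat -> R) : R :=
  match n with O => 0 | S n => Lsum n l + l n end.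
Fixpoint mr (n : nat) (l : nat -> R) : R :=
  match n with O => 0 | S n => Rmax 0 (Rmax (mr n l - l n) (l n - Lsum n l)) end.

Lemma Lsum_nonneg n l : (forall i, (i < n)%nat -> 0 < l i) -> 0 <= Lsum n l.
Proof. induction n; simpl; intros H; [lra|]. pose proof (H n (Nat.lt_succ_diag_r n)).
  assert (0 <= Lsum n l) by (apply IHn; intros; apply H; lia). lra. Qed.

Lemma Lsum_pos n l : (1 <= n)%nat -> (forall i, (i < n)%nat -> 0 < l i) -> 0 < Lsum n l.
Proof. destruct n; intros; [lia|]. simpl. pose proof (H0 n (Nat.lt_succ_diag_r n)).
  assert (0 <= Lsum n l) by (apply Lsum_nonneg; intros; apply H0; lia). lra. Qed.

Lemma mr_bounds n l : (forall i, (i < n)%nat -> 0 < l i) -> 0 <= mr n l <= Lsum n l.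
Proof. induction n; simpl; intros H; [lra|]. pose proof (H n (Nat.lt_succ_diag_r n)).
  assert (0 <= mr n l <= Lsum n l) by (apply IHn; intros; apply H; lia).
  split. apply Rmax_l. apply Rmax_lub; [lra|]. apply Rmax_lub; lra. Qed.

Lemma inC_restrict n l q : inC (S n) l q -> inC n l q.
Proof. intros H i Hi. apply H; lia. Qed.

Lemma range_iff n l : (forall i, (i < n)%nat -> 0 < l i) ->
  forall r, range_P n l r <-> mr n l <= r <= Lsum n l.
Proof.
  induction n; intros Hl r.
  - simpl. split.
    + intros [q [_ Hq]]. unfold theta, dist2 in Hq. rewrite <- Hq.
      replace ((fst (q 0%nat) - fst (q 0%nat)) ^ 2 + (snd (q 0%nat) - snd (q 0%nat)) ^ 2) with 0 by ring.
      rewrite sqrt_0; lra.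
    + intros H. exists (fun _ => (0,0)). split. intros i Hi; lia.
      unfold theta, dist2; cbn [fst snd]. replace ((0 - 0) ^ 2 + (0 - 0) ^ 2) with 0 by ring.
      rewrite sqrt_0; lra.
  - assert (Hl' : forall i, (i < n)%nat -> 0 < l i) by (intros; apply Hl; lia).
    pose proof (Hl n (Nat.lt_succ_diag_r n)) as Hln.
    pose proof (mr_bounds n l Hl') as Hmb.
    specialize (IHn Hl'). split.
    + intros [q [Hq Hth]].
      assert (Hr : mr n l <= theta n q <= Lsum n l) by (apply IHn; exists q; split; auto; apply inC_restrict; auto).
      assert (He : nrm (vsub (q (S n)) (q n)) = l n) by (rewrite <- dist2_nrm; apply Hq; lia).
      assert (E : theta (S n) q = nrm (vadd (vsub (q n) (q 0%nat)) (vsub (q (S n)) (q n)))).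
      { unfold theta. rewrite dist2_nrm. f_equal. unfold vadd, vsub; cbn [fst snd]. f_equal; ring. }
      assert (Hw : theta n q = nrm (vsub (q n) (q 0%nat))) by (unfold theta; apply dist2_nrm).
      pose proof (nrm_tri (vsub (q n) (q 0%nat)) (vsub (q (S n)) (q n))).
      pose proof (nrm_tri_rev (vsub (q n) (q 0%nat)) (vsub (q (S n)) (q n))).
      rewrite <- E, <- Hw, He, Hth in *. simpl.
      assert (Rabs (theta n q - l n) >= theta n q - l n /\ Rabs (theta n q - l n) >= l n - theta n q).
      { split; unfold Rabs; destruct (Rcase_abs _); lra. }
      split; [|lra]. apply Rmax_lub. pose proof (nrm_nonneg (vadd (vsub (q n) (q 0%nat)) (vsub (q (S n)) (q n)))); lra.
      apply Rmax_lub; lra.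
    + intros [H1 H2]. simpl in H1, H2.
      pose proof (Rmax_l 0 (Rmax (mr n l - l n) (l n - Lsum n l))).
      pose proof (Rmax_r 0 (Rmax (mr n l - l n) (l n - Lsum n l))).
      pose proof (Rmax_l (mr n l - l n) (l n - Lsum n l)).
      pose proof (Rmax_r (mr n l - l n) (l n - Lsum n l)).
      set (b := Rmax (mr n l) (Rabs (r - l n))).
      assert (Hb : mr n l <= b <= Lsum n l).
      { split. apply Rmax_l. apply Rmax_lub. lra. unfold Rabs; destruct (Rcase_abs _); lra. }
      destruct (proj2 (IHn b) Hb) as [q [Hq Hqb]].
      assert (Htr : Rabs (b - l n) <= r <= b + l n).
      { assert (Hm : 0 <= r) by lra.
        split; [apply Rabs_le|]; unfold b, Rmax; destruct (Rle_dec _ _);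
          unfold Rabs in *; destruct (Rcase_abs (r - l n)); lra. }
      destruct (place (vsub (q n) (q 0%nat)) b (l n) r) as [e [He1 He2]]; auto.
      { rewrite <- dist2_nrm. auto. }
      exists (fun i => if (i <=? n)%nat then q i else vadd (q n) e). split.
      * intros i Hi. destruct (Nat.eq_dec i n) as [->|Hin].
        -- rewrite Nat.leb_refl. replace (S n <=? n)%nat with false by (symmetry; apply Nat.leb_gt; lia).
           rewrite dist2_nrm. rewrite <- He1. f_equal. destruct e; unfold vsub, vadd; cbn [fst snd]; f_equal; ring.
        -- replace (i <=? n)%nat with true by (symmetry; apply Nat.leb_le; lia).
           replace (S i <=? n)%nat with true by (symmetry; apply Nat.leb_le; lia). apply Hq; lia.
      * unfold theta. replace (0 <=? n)%nat with true by (symmetry; apply Nat.leb_le; lia).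
        replace (S n <=? n)%nat with false by (symmetry; apply Nat.leb_gt; lia).
        rewrite dist2_nrm, <- He2. f_equal. unfold vsub, vadd; cbn [fst snd]; f_equal; ring.
Qed.

Definition glue (nA : nat) (qA qB : config) (c s : R) : config :=
  fun i => if (i <=? nA)%nat then qA i
           else vadd (qA nA) (rot c s (vsub (qB (i - nA)%nat) (qB 0%nat))).

Definition shiftl (j : nat) (l : nat -> R) : nat -> R := fun i => l (i + j)%nat.
Definition shiftp (j : nat) (p : config) : config := fun i => p (i + j)%nat.

Lemma leb_t i n : (i <= n)%nat -> (i <=? n)%nat = true.
Proof. intros; apply Nat.leb_le; auto. Qed.
Lemma leb_f i n : (n < i)%nat -> (i <=? n)%nat = false.
Proof. intros; apply Nat.leb_gt; auto. Qed.

Lemma dist2_rot_tr z c s x y o : c ^ 2 + s ^ 2 = 1 ->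
  dist2 (vadd z (rot c s (vsub x o))) (vadd z (rot c s (vsub y o))) = dist2 x y.
Proof. intros H. rewrite !dist2_nrm. rewrite <- (nrm_rot c s (vsub y x)) by auto.
  f_equal. unfold vadd, vsub, rot; cbn [fst snd]; f_equal; ring. Qed.

Lemma glue_inC nA nB l qA qB c s : c ^ 2 + s ^ 2 = 1 -> inC nA l qA -> inC nB (shiftl nA l) qB ->
  inC (nA + nB) l (glue nA qA qB c s).
Proof.
  intros Hcs HA HB i Hi. unfold glue.
  destruct (Nat.lt_ge_cases i nA).
  - rewrite !leb_t by lia. apply HA; auto.
  - destruct (Nat.eq_dec i nA) as [->|].
    + rewrite Nat.leb_refl, leb_f by lia. replace (S nA - nA)%nat with 1%nat by lia.
      rewrite dist2_nrm. 
      replace (vsub (vadd (qA nA) (rot c s (vsub (qB 1%nat) (qB 0%nat)))) (qA nA))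
        with (rot c s (vsub (qB 1%nat) (qB 0%nat))) by (unfold vsub, vadd, rot; cbn [fst snd]; f_equal; ring).
      rewrite nrm_rot, <- dist2_nrm by auto. replace nA with (0 + nA)%nat at 2 by lia. apply HB. lia.
    + rewrite !leb_f by lia. rewrite dist2_rot_tr by auto.
      replace (S i - nA)%nat with (S (i - nA)) by lia. replace i with ((i - nA) + nA)%nat at 3 by lia.
      apply HB. lia.
Qed.

Lemma glue_theta nA nB qA qB c s : (1 <= nB)%nat ->
  theta (nA + nB) (glue nA qA qB c s) =
  nrm (vadd (vsub (qA nA) (qA 0%nat)) (rot c s (vsub (qB nB) (qB 0%nat)))).
Proof. intros H. unfold theta, glue. rewrite leb_t, leb_f by lia. rewrite dist2_nrm.
  replace (nA + nB - nA)%nat with nB by lia. f_equal. unfold vsub, vadd; cbn [fst snd]; f_equal; ring. Qed.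

Lemma glue_pc nA nB (qA qB : R -> config) c s :
  (forall i, (i <= nA)%nat -> pc (fun t => qA t i)) -> (forall i, (i <= nB)%nat -> pc (fun t => qB t i)) ->
  cont01 c -> cont01 s -> forall i, (i <= nA + nB)%nat -> pc (fun t => glue nA (qA t) (qB t) (c t) (s t) i).
Proof. intros HA HB Hc Hs i Hi. unfold glue. destruct (Nat.le_gt_cases i nA).
  - rewrite leb_t by auto. apply HA; auto.
  - rewrite leb_f by auto. apply pc_add. apply HA; lia. apply pc_rot; auto. apply pc_sub; apply HB; lia. Qed.

Lemma glue_id nA nB p qA qB : (forall i, (i <= nA)%nat -> qA i = p i) -> (forall i, (i <= nB)%nat -> qB i = p (i + nA)%nat) ->
  forall i, (i <= nA + nB)%nat -> glue nA qA qB 1 0 i = p i.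
Proof. intros HA HB i Hi. unfold glue. destruct (Nat.le_gt_cases i nA).
  - rewrite leb_t by auto. auto.
  - rewrite leb_f by auto. rewrite rot_id, HA, !HB by lia. replace (i - nA + nA)%nat with i by lia.
    simpl (0 + nA)%nat. destruct (p i), (p nA); unfold vadd, vsub; cbn [fst snd]. simpl. f_equal; ring. Qed.

Lemma inC_prefix n j l p : (j <= n)%nat -> inC n l p -> inC j l p.
Proof. intros H HC i Hi. apply HC; lia. Qed.

Lemma inC_suffix n j l p : (j <= n)%nat -> inC n l p -> inC (n - j) (shiftl j l) (shiftp j p).
Proof. intros H HC i Hi. unfold shiftl, shiftp. replace (S i + j)%nat with (S (i + j)) by lia. apply HC; lia. Qed.

Lemma theta_nrm n p : theta n p = nrm (vsub (p n) (p 0%nat)).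
Proof. unfold theta; apply dist2_nrm. Qed.

Lemma Lsum_add a b l : Lsum (a + b) l = Lsum a l + Lsum b (shiftl a l).
Proof. induction b; simpl. rewrite Nat.add_0_r; ring.
  rewrite Nat.add_succ_r; simpl. rewrite IHb. unfold shiftl. replace (b + a)%nat with (a + b)%nat by lia. ring. Qed.

Lemma finite_delta (k : nat) (P : nat -> R -> Prop) :
  (forall i d d', 0 < d' <= d -> P i d -> P i d') ->
  (forall i, (i <= k)%nat -> exists d, 0 < d /\ P i d) ->
  exists d, 0 < d /\ forall i, (i <= k)%nat -> P i d.
Proof.
  intros Mon. induction k; intros H.
  - destruct (H 0%nat (le_n 0)) as [d [Hd HP]]. exists d; split; auto. intros i Hi. 
    replace i with 0%nat by lia; auto.
  - destruct IHk as [d1 [Hd1 H1]]. intros; apply H; lia.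
    destruct (H (S k) (le_n _)) as [d2 [Hd2 H2]].
    exists (Rmin d1 d2). split. apply Rmin_glb_lt; auto.
    intros i Hi. destruct (Nat.eq_dec i (S k)) as [->|].
    + apply Mon with d2; auto. split. apply Rmin_glb_lt; auto. apply Rmin_r.
    + apply Mon with d1; auto. split. apply Rmin_glb_lt; auto. apply Rmin_l. apply H1; lia.
Qed.

Lemma dist2_small x y e : 0 < e -> Rabs (fst y - fst x) < e / 2 -> Rabs (snd y - snd x) < e / 2 -> dist2 x y < e.
Proof.
  intros He H1 H2. rewrite dist2_nrm. unfold nrm, nsq, vsub; cbn [fst snd].
  apply Rle_lt_trans with (Rabs (fst y - fst x) + Rabs (snd y - snd x)); [|lra].
  apply sq_le_nrm. pose proof (Rabs_pos (fst y - fst x)); pose proof (Rabs_pos (snd y - snd x)); lra.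
  pose proof (pow2_ge_0 (fst y - fst x)); pose proof (pow2_ge_0 (snd y - snd x)).
  rewrite pow2_sqrt by lra.
  rewrite <- (pow2_abs (fst y - fst x)), <- (pow2_abs (snd y - snd x)).
  pose proof (Rabs_pos (fst y - fst x)); pose proof (Rabs_pos (snd y - snd x)).
  set (a := Rabs (fst y - fst x)) in *. set (b := Rabs (snd y - snd x)) in *.
  assert (0 <= a * b) by (apply Rmult_le_pos; auto). nra.
Qed.

Lemma coord_contM k l (q : R -> config) :
  (forall t, 0 <= t <= 1 -> inC k l (q t)) -> (forall i, (i <= k)%nat -> pc (fun t => q t i)) -> contM k l q.
Proof.
  intros HC Hp. split; auto. intros U HU _ t Ht HUt.
  destruct (HU (q t) (HC t Ht) HUt) as [eps [He HUe]].
  assert (FD := finite_delta k (fun i d => forall u, 0 <= u <= 1 -> Rabs (u - t) < d -> dist2 (q t i) (q u i) < eps)).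
  destruct FD as [d [Hd Hall]].
  - intros i d d' Hd' HP u Hu Hut. apply HP; auto. lra.
  - intros i Hi. destruct (Hp i Hi) as [H1 H2].
    assert (He2 : 0 < eps / 2) by lra.
    destruct (H1 t Ht _ He2) as [d1 [Hd1 Hd1']]. destruct (H2 t Ht _ He2) as [d2 [Hd2 Hd2']].
    exists (Rmin d1 d2). split. apply Rmin_glb_lt; auto.
    intros u Hu Hut. apply dist2_small; auto.
    apply Hd1'; auto. pose proof (Rmin_l d1 d2); lra. apply Hd2'; auto. pose proof (Rmin_r d1 d2); lra.
  - exists d. split; [auto|]. intros u Hu Hut. apply HUe. apply HC; auto. intros i Hi; apply Hall; auto.
Qed.

Lemma nsq_scal k v : nsq (vscal k v) = k ^ 2 * nsq v.
Proof. unfold nsq, vscal; cbn [fst snd]; ring. Qed.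

Lemma unit_of v b : nrm v = b -> 0 < b -> nsq (vscal (/ b) v) = 1.
Proof. intros H Hb. rewrite nsq_scal, <- nrm_sq, H. field. lra. Qed.

Lemma lagrange u v : dot u v ^ 2 + cross u v ^ 2 = nsq u * nsq v.
Proof. unfold dot, cross, nsq; ring. Qed.

Lemma rot_dc u v : rot (dot u v) (cross u v) u = vscal (nsq u) v.
Proof. unfold rot, dot, cross, nsq, vscal; cbn [fst snd]; f_equal; ring. Qed.

Lemma vscal1 v : vscal 1 v = v.
Proof. unfold vscal; destruct v; cbn [fst snd]; f_equal; ring. Qed.

Lemma vscal_scal a b v : vscal a (vscal b v) = vscal (a * b) v.
Proof. unfold vscal; cbn [fst snd]; f_equal; ring. Qed.

Definition align (a b : pt) (x y al sg : R) : R * R :=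
  let c := ccos x y al in
  let D := rot c (sg * sqrt (1 - c ^ 2)) (vscal (/ x) a) in
  (dot (vscal (/ y) b) D, cross (vscal (/ y) b) D).

Lemma align_props a b x y al sg : nrm a = x -> nrm b = y -> 0 < x -> 0 < y ->
  Rabs (x - y) <= al <= x + y -> sg ^ 2 = 1 ->
  fst (align a b x y al sg) ^ 2 + snd (align a b x y al sg) ^ 2 = 1 /\
  nrm (vadd a (rot (fst (align a b x y al sg)) (snd (align a b x y al sg)) b)) = al.
Proof.
  intros Ha Hb Hx Hy Htr Hsg. unfold align; cbn [fst snd].
  pose proof (ccos_bound x y al Hx Hy Htr) as Hc.
  set (c := ccos x y al) in *. set (s := sg * sqrt (1 - c ^ 2)).
  assert (Hcs : c ^ 2 + s ^ 2 = 1) by (apply csq_sig; auto).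
  set (D := rot c s (vscal (/ x) a)).
  assert (HD : nsq D = 1) by (unfold D; rewrite nsq_rot by auto; apply unit_of; auto).
  assert (Hbh : nsq (vscal (/ y) b) = 1) by (apply unit_of; auto).
  split.
  - rewrite lagrange, HD, Hbh; ring.
  - set (bh := vscal (/ y) b) in *.
    assert (E : forall cr sr, rot cr sr b = vscal y (rot cr sr bh)).
    { intros. rewrite <- rot_scal. unfold bh. rewrite vscal_scal, Rinv_r, vscal1 by lra; auto. }
    rewrite E, rot_dc, Hbh, vscal1.
    unfold D. rewrite rot_scal, vscal_scal.
    apply nrm_eq. pose proof (Rabs_pos (x - y)); lra.
    replace (y * / x) with (y / x) by (unfold Rdiv; ring).
    apply place_nsq; auto.
Qed.

Definition sgn (a b : pt) : R := if Rle_dec 0 (cross a b) then 1 else -1.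

Lemma sgn_sq a b : sgn a b ^ 2 = 1.
Proof. unfold sgn; destruct (Rle_dec _ _); ring. Qed.

Lemma align_init a b x y : nrm a = x -> nrm b = y -> 0 < x -> 0 < y ->
  align a b x y (nrm (vadd a b)) (sgn a b) = (1, 0).
Proof.
  intros Ha Hb Hx Hy.
  set (ah := vscal (/ x) a). set (bh := vscal (/ y) b).
  assert (Hah : nsq ah = 1) by (apply unit_of; auto).
  assert (Hbh : nsq bh = 1) by (apply unit_of; auto).
  assert (Hc : ccos x y (nrm (vadd a b)) = dot ah bh).
  { unfold ccos. rewrite nrm_sq. 
    assert (nsq a = x ^ 2) by (rewrite <- nrm_sq, Ha; auto).
    assert (nsq b = y ^ 2) by (rewrite <- nrm_sq, Hb; auto).
    assert (E1 : nsq (vadd a b) = nsq a + nsq b + 2 * dot a b) by (unfold nsq, vadd, dot; cbn [fst snd]; ring).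
    assert (E2 : dot ah bh = / x * / y * dot a b) by (unfold ah, bh, dot, vscal; cbn [fst snd]; ring).
    rewrite E1, E2, H, H0. field. lra. }
  assert (Hs : sgn a b * sqrt (1 - dot ah bh ^ 2) = cross ah bh).
  { assert (E : 1 - dot ah bh ^ 2 = Rsqr (cross ah bh)).
    { pose proof (lagrange ah bh). rewrite Hah, Hbh in H. unfold Rsqr. lra. }
    rewrite E, sqrt_Rsqr_abs.
    assert (Ecr : cross ah bh = / x * / y * cross a b) by (unfold ah, bh, cross, vscal; cbn [fst snd]; ring).
    assert (0 < / x * / y) by (apply Rmult_lt_0_compat; apply Rinv_0_lt_compat; auto).
    unfold sgn. rewrite Ecr. destruct (Rle_dec 0 (cross a b)).
    - rewrite Rabs_right by nra. ring.
    - rewrite Rabs_left by nra. ring. }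
  unfold align. rewrite Hc. fold ah. rewrite Hs. fold bh. rewrite rot_dc, Hah, vscal1.
  f_equal. rewrite <- Hbh; unfold dot, nsq; ring. unfold cross; ring.
Qed.

Lemma clamp_in lo hi x : lo <= hi -> lo <= Rmax lo (Rmin hi x) <= hi.
Proof. intros. split. apply Rmax_l. apply Rmax_lub; auto. apply Rmin_l. Qed.
Lemma clamp_fix lo hi x : lo <= x <= hi -> Rmax lo (Rmin hi x) = x.
Proof. intros. rewrite Rmin_right by lra. rewrite Rmax_right by lra. auto. Qed.
Lemma clamp_pos lo hi x : 0 < hi -> 0 < x -> 0 < Rmax lo (Rmin hi x).
Proof. intros. eapply Rlt_le_trans; [|apply Rmax_r]. apply Rmin_glb_lt; auto. Qed.

Lemma c01_pow2 f : cont01 f -> cont01 (fun t => f t ^ 2).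
Proof. intros H. apply (c01_ext (fun t => f t * f t)). intros; ring. apply c01_mult; auto. Qed.

Lemma c01_ccos x y al : cont01 x -> cont01 y -> cont01 al -> (forall t, D01 t -> 0 < x t /\ 0 < y t) ->
  cont01 (fun t => ccos (x t) (y t) (al t)).
Proof. intros. unfold ccos. apply c01_div.
  apply c01_minus; [apply c01_minus|]; apply c01_pow2; auto.
  apply c01_mult; [apply c01_mult|]; auto. apply c01_const.
  intros t Ht. destruct (H2 t Ht). assert (0 < 2 * x t * y t) by nra. lra. Qed.

Lemma align_cont a b x y al sg : pc a -> pc b -> cont01 x -> cont01 y -> cont01 al ->
  (forall t, D01 t -> 0 < x t /\ 0 < y t) ->
  (forall t, D01 t -> -1 <= ccos (x t) (y t) (al t) <= 1) ->
  cont01 (fun t => fst (align (a t) (b t) (x t) (y t) (al t) sg)) /\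
  cont01 (fun t => snd (align (a t) (b t) (x t) (y t) (al t) sg)).
Proof.
  intros Ha Hb Hx Hy Hal Hpos Hc. unfold align; cbn [fst snd].
  assert (Hcc := c01_ccos x y al Hx Hy Hal Hpos).
  assert (HD : pc (fun t => rot (ccos (x t) (y t) (al t)) (sg * sqrt (1 - ccos (x t) (y t) (al t) ^ 2)) (vscal (/ x t) (a t)))).
  { apply pc_rot; auto. apply c01_scal. apply c01_sqrt. apply c01_minus. apply c01_const. apply c01_pow2; auto.
    intros; apply sq_1m; auto.
    apply pc_scal; auto. apply c01_inv; auto. intros t Ht; destruct (Hpos t Ht); lra. }
  assert (Hbh : pc (fun t => vscal (/ y t) (b t))).
  { apply pc_scal; auto. apply c01_inv; auto. intros t Ht; destruct (Hpos t Ht); lra. }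
  split. apply c01_dot; auto. apply c01_cross; auto.
Qed.

Definition LiftProp (n : nat) : Prop := forall (l : nat -> R) (p : config) (alpha : R -> R),
  (forall i, (i < n)%nat -> 0 < l i) -> inC n l p -> cont01 alpha ->
  (forall t, 0 <= t <= 1 -> mr n l <= alpha t <= Lsum n l) -> alpha 0 = theta n p ->
  exists q : R -> config, (forall t, 0 <= t <= 1 -> inC n l (q t)) /\
    (forall i, (i <= n)%nat -> q 0 i = p i) /\ (forall i, (i <= n)%nat -> pc (fun t => q t i)) /\
    (forall t, 0 <= t <= 1 -> theta n (q t) = alpha t).

Lemma lift1 : LiftProp 1.
Proof.
  intros l p alpha Hl Hp Ha Hr H0. exists (fun _ => p). split; [auto|]. split; [auto|]. split.
  intros; apply pc_const.
  intros t Ht. specialize (Hr t Ht). simpl in Hr.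
  assert (E : theta 1 p = l 0%nat) by (apply Hp; lia).
  pose proof (Hl 0%nat Nat.lt_0_1).
  rewrite (Rmax_right (0 - l 0%nat) (l 0%nat - 0)) in Hr by lra.
  rewrite Rmax_right in Hr by lra. rewrite E. lra.
Qed.

Lemma theta_range n l p : (forall i, (i < n)%nat -> 0 < l i) -> inC n l p -> mr n l <= theta n p <= Lsum n l.
Proof. intros. apply range_iff; auto. exists p; auto. Qed.

Lemma pt_neq_nrm u v : u <> v -> 0 < nrm (vsub u v).
Proof. intros H. destruct (Rle_lt_dec (nrm (vsub u v)) 0); auto. 
  pose proof (nrm_nonneg (vsub u v)). assert (nrm (vsub u v) = 0) by lra.
  apply nrm_zero_eq in H1. exfalso; apply H. destruct u, v; unfold vsub in H1; cbn [fst snd] in H1.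
  injection H1; intros; f_equal; lra. Qed.

Lemma abs_le u a : Rabs u <= a -> - a <= u <= a.
Proof. unfold Rabs; destruct (Rcase_abs u); lra. Qed.
Lemma le_abs u a : - a <= u <= a -> Rabs u <= a.
Proof. unfold Rabs; destruct (Rcase_abs u); lra. Qed.

Lemma theta_split n j q : theta n q = nrm (vadd (vsub (q j) (q 0%nat)) (vsub (q n) (q j))).
Proof. rewrite theta_nrm. f_equal. unfold vadd, vsub; cbn [fst snd]; f_equal; ring. Qed.

Lemma theta_shift nB j q : theta nB (shiftp j q) = nrm (vsub (q (nB + j)%nat) (q j)).
Proof. rewrite theta_nrm. unfold shiftp. simpl (0 + j)%nat. auto. Qed.

Lemma split_feas n j l q : (j <= n)%nat -> (forall i, (i < n)%nat -> 0 < l i) -> inC n l q ->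
  let x := theta j q in let y := theta (n - j) (shiftp j q) in
  mr j l <= x <= Lsum j l /\ mr (n - j) (shiftl j l) <= y <= Lsum (n - j) (shiftl j l) /\
  - theta n q <= x - y <= theta n q /\ theta n q <= x + y.
Proof.
  intros Hj Hl Hq x y.
  assert (HlA : forall i, (i < j)%nat -> 0 < l i) by (intros; apply Hl; lia).
  assert (HlB : forall i, (i < n - j)%nat -> 0 < shiftl j l i) by (intros; unfold shiftl; apply Hl; lia).
  split. apply theta_range; auto. eapply inC_prefix; eauto.
  split. apply theta_range; auto. apply inC_suffix; auto.
  assert (Ex : x = nrm (vsub (q j) (q 0%nat))) by (unfold x; apply theta_nrm).
  assert (Ey : y = nrm (vsub (q n) (q j))) by (unfold y; rewrite theta_shift; f_equal; f_equal; f_equal; lia).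
  rewrite (theta_split n j q), Ex, Ey.
  split. apply abs_le. apply nrm_tri_rev. apply nrm_tri.
Qed.

Lemma step2 n j : (1 <= j)%nat -> (j < n)%nat -> LiftProp j -> LiftProp (n - j) ->
  forall l p alpha, (forall i, (i < n)%nat -> 0 < l i) -> inC n l p -> cont01 alpha ->
  (forall t, 0 <= t <= 1 -> mr n l <= alpha t <= Lsum n l) -> alpha 0 = theta n p ->
  p j <> p 0%nat -> p j <> p n ->
  exists q : R -> config, (forall t, 0 <= t <= 1 -> inC n l (q t)) /\
    (forall i, (i <= n)%nat -> q 0 i = p i) /\ (forall i, (i <= n)%nat -> pc (fun t => q t i)) /\
    (forall t, 0 <= t <= 1 -> theta n (q t) = alpha t).
Proof.
  intros Hj1 Hjn IHA IHB l p alpha Hl Hp Hal Hr H0 Hne0 Hnen.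
  set (nB := (n - j)%nat) in *.
  assert (En : n = (j + nB)%nat) by (unfold nB; lia).
  assert (HlA : forall i, (i < j)%nat -> 0 < l i) by (intros; apply Hl; lia).
  assert (HlB : forall i, (i < nB)%nat -> 0 < shiftl j l i) by (intros; unfold shiftl; apply Hl; lia).
  assert (HpA : inC j l p) by (apply (inC_prefix n j l p); [lia|auto]).
  assert (HpB : inC nB (shiftl j l) (shiftp j p)) by (apply inC_suffix; auto; lia).
  set (mA := mr j l) in *. set (LA := Lsum j l) in *.
  set (mB := mr nB (shiftl j l)) in *. set (LB := Lsum nB (shiftl j l)) in *.
  assert (HmA := mr_bounds j l HlA). assert (HmB := mr_bounds nB _ HlB).
  assert (HLA : 0 < LA) by (apply Lsum_pos; auto).
  assert (HLB : 0 < LB). { apply Lsum_pos. unfold nB; lia. exact HlB. }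
  assert (Hmn := mr_bounds n l Hl).
  assert (Hapos : forall t, D01 t -> 0 <= alpha t) by (intros t Ht; specialize (Hr t Ht); lra).
  assert (Feas : forall t, D01 t -> exists x y, mA <= x <= LA /\ mB <= y <= LB /\
                   - alpha t <= x - y <= alpha t /\ alpha t <= x + y).
  { intros t Ht. destruct (proj2 (range_iff n l Hl (alpha t)) (Hr t Ht)) as [q [Hq Hqt]].
    destruct (split_feas n j l q) as [A [B [C D]]]; auto; try lia.
    rewrite Hqt in C, D. eexists; eexists; split; [exact A|split; [exact B|split; eauto]]. }
  set (a0 := vsub (p j) (p 0%nat)). set (b0 := vsub (p n) (p j)).
  set (x0 := nrm a0). set (y0 := nrm b0).
  assert (Hx0 : 0 < x0) by (apply pt_neq_nrm; auto).
  assert (Hy0 : 0 < y0) by (apply pt_neq_nrm; auto).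
  assert (HthA : theta j p = x0) by (apply theta_nrm).
  assert (HthB : theta nB (shiftp j p) = y0) by (rewrite theta_shift; unfold y0, b0; replace (nB + j)%nat with n by lia; auto).
  assert (Hal0 : alpha 0 = nrm (vadd a0 b0)) by (rewrite H0; apply theta_split).
  destruct (split_feas n j l p) as [FA [FB [FC FD]]]; auto; try lia.
  fold nB mA LA mB LB in FA, FB, FC, FD. rewrite HthA, HthB in *. rewrite <- H0 in FC, FD.
  set (b1 := fun t => Rmax (Rmax mA (Rmax (alpha t - LB) (mB - alpha t))) (Rmin (Rmin LA (alpha t + LB)) x0)).
  assert (B1 : forall t, D01 t -> mA <= b1 t <= LA /\ alpha t - LB <= b1 t /\ mB - alpha t <= b1 t /\ b1 t <= alpha t + LB /\ 0 < b1 t).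
  { intros t Ht. destruct (Feas t Ht) as [x [y [F1 [F2 [F3 F4]]]]].
    assert (lo1 : Rmax mA (Rmax (alpha t - LB) (mB - alpha t)) <= Rmin LA (alpha t + LB)).
    { apply Rmax_lub; [|apply Rmax_lub]; apply Rmin_glb; lra. }
    destruct (clamp_in _ _ x0 lo1) as [C1 C2]. fold (b1 t) in C1, C2.
    pose proof (Rmax_l mA (Rmax (alpha t - LB) (mB - alpha t))).
    pose proof (Rmax_r mA (Rmax (alpha t - LB) (mB - alpha t))).
    pose proof (Rmax_l (alpha t - LB) (mB - alpha t)). pose proof (Rmax_r (alpha t - LB) (mB - alpha t)).
    pose proof (Rmin_l LA (alpha t + LB)). pose proof (Rmin_r LA (alpha t + LB)).
    assert (0 < b1 t). { apply clamp_pos; auto. apply Rmin_glb_lt; auto. specialize (Hapos t Ht); lra. }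
    repeat split; lra. }
  set (b2 := fun t => Rmax (Rmax mB (Rabs (alpha t - b1 t))) (Rmin (Rmin LB (alpha t + b1 t)) y0)).
  assert (B2 : forall t, D01 t -> mB <= b2 t <= LB /\ Rabs (b1 t - b2 t) <= alpha t <= b1 t + b2 t /\ 0 < b2 t).
  { intros t Ht. destruct (B1 t Ht) as [G1 [G2 [G3 [G4 G5]]]]. specialize (Hapos t Ht).
    assert (lo2 : Rmax mB (Rabs (alpha t - b1 t)) <= Rmin LB (alpha t + b1 t)).
    { apply Rmax_lub; apply Rmin_glb; try lra; apply le_abs; lra. }
    destruct (clamp_in _ _ y0 lo2) as [C1 C2]. fold (b2 t) in C1, C2.
    pose proof (Rmax_l mB (Rabs (alpha t - b1 t))). pose proof (Rmax_r mB (Rabs (alpha t - b1 t))).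
    pose proof (Rmin_l LB (alpha t + b1 t)). pose proof (Rmin_r LB (alpha t + b1 t)).
    pose proof (abs_le (alpha t - b1 t) (b2 t)) as A.
    assert (0 < b2 t). { apply clamp_pos; auto. apply Rmin_glb_lt; lra. }
    split; [lra|]. split; [|lra]. split; [|lra]. apply le_abs. destruct A; lra. }
  assert (Hb10 : b1 0 = x0).
  { unfold b1. apply clamp_fix. split.
    apply Rmax_lub; [|apply Rmax_lub]; lra. apply Rmin_glb; lra. }
  assert (Hb20 : b2 0 = y0).
  { unfold b2. rewrite Hb10. apply clamp_fix. split.
    apply Rmax_lub; [lra|]. apply le_abs; lra. apply Rmin_glb; lra. }
  assert (Cb1 : cont01 b1).
  { unfold b1. apply c01_max. apply c01_max. apply c01_const. apply c01_max; [apply c01_minus|apply c01_minus]; auto; apply c01_const.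
    apply c01_min. apply c01_min. apply c01_const. apply c01_plus; auto; apply c01_const. apply c01_const. }
  assert (Cb2 : cont01 b2).
  { unfold b2. apply c01_max. apply c01_max. apply c01_const. apply c01_abs, c01_minus; auto.
    apply c01_min. apply c01_min. apply c01_const. apply c01_plus; auto. apply c01_const. }
  destruct (IHA l p b1) as [qA [QA1 [QA2 [QA3 QA4]]]]; auto.
  { intros t Ht. destruct (B1 t Ht); tauto. }
  { rewrite Hb10; auto. }
  destruct (IHB (shiftl j l) (shiftp j p) b2) as [qB [QB1 [QB2 [QB3 QB4]]]]; auto.
  { intros t Ht. destruct (B2 t Ht); tauto. }
  { rewrite Hb20; auto. }
  set (aV := fun t => vsub (qA t j) (qA t 0%nat)).
  set (bV := fun t => vsub (qB t nB) (qB t 0%nat)).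
  assert (HaV : forall t, D01 t -> nrm (aV t) = b1 t) by (intros; unfold aV; rewrite <- theta_nrm; auto).
  assert (HbV : forall t, D01 t -> nrm (bV t) = b2 t) by (intros; unfold bV; rewrite <- theta_nrm; auto).
  set (sg := sgn a0 b0).
  set (al := fun t => align (aV t) (bV t) (b1 t) (b2 t) (alpha t) sg).
  assert (AP : forall t, D01 t -> fst (al t) ^ 2 + snd (al t) ^ 2 = 1 /\
                nrm (vadd (aV t) (rot (fst (al t)) (snd (al t)) (bV t))) = alpha t).
  { intros t Ht. destruct (B1 t Ht) as [_ [_ [_ [_ P1]]]]. destruct (B2 t Ht) as [_ [P2 P3]].
    apply align_props; auto. apply sgn_sq. }
  exists (fun t => glue j (qA t) (qB t) (fst (al t)) (snd (al t))).
  split; [|split; [|split]].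
  - intros t Ht. rewrite En. apply glue_inC; auto. apply AP; auto.
  - intros i Hi. 
    assert (E0 : al 0 = (1, 0)).
    { unfold al. assert (aV 0 = a0) by (unfold aV, a0; rewrite !QA2; auto; lia).
      assert (bV 0 = b0).
      { unfold bV, b0. rewrite !QB2 by lia. unfold shiftp. f_equal; f_equal; lia. }
      rewrite H, H1, Hb10, Hb20, Hal0. apply align_init; auto. }
    rewrite E0; cbn [fst snd]. apply (glue_id j nB p (qA 0) (qB 0)). intros; apply QA2; lia. intros k Hk; rewrite QB2 by lia; reflexivity. lia.
  - intros i Hi. rewrite En in Hi.
    destruct (align_cont aV bV b1 b2 alpha sg) as [C1 C2]; auto.
    + unfold aV; apply pc_sub; apply QA3; lia.
    + unfold bV; apply pc_sub; apply QB3; lia.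
    + intros t Ht. split; [apply B1|apply B2]; auto.
    + intros t Ht. apply ccos_bound. apply B1; auto. apply B2; auto. apply B2; auto.
    + apply (glue_pc j nB qA qB); auto.
  - intros t Ht. rewrite En, glue_theta by (unfold nB; lia). apply AP; auto.
Qed.

Definition zc (x : R) : R := Rmax (-1) (Rmin ((x + 1) / 2) ((5 - x ^ 2) / 4)).
Definition zc' (x : R) : R := Rmin 1 ((x + 1) / 2).
Definition zs (x : R) : R := sqrt (1 - zc x ^ 2).
Definition zs' (x : R) : R := sqrt (1 - zc' x ^ 2).
Definition zy (x : R) : R := Rmax 1 (x - 2).

Lemma zc_bound x : 0 <= x -> -1 <= zc x <= 1.
Proof. intros. unfold zc. split. apply Rmax_l. apply Rmax_lub. lra.
  destruct (Rle_dec x 1). eapply Rle_trans; [apply Rmin_l|lra]. eapply Rle_trans; [apply Rmin_r|nra]. Qed.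

Lemma zc'_bound x : 0 <= x -> -1 <= zc' x <= 1.
Proof. intros. unfold zc'. split. apply Rmin_glb; lra. apply Rmin_l. Qed.

Lemma sqrt0 : sqrt 0 = 0. Proof. apply sqrt_0. Qed.

Lemma zig_alg x : 0 <= x ->
  (1 - zy x * zc x + (2 * zc' x ^ 2 - 1)) ^ 2 + (- zy x * zs x + 2 * zc' x * zs' x) ^ 2 = x ^ 2.
Proof.
  intros Hx. pose proof (csq (zc x) (zc_bound x Hx)) as H1. pose proof (csq (zc' x) (zc'_bound x Hx)) as H2.
  fold (zs x) in H1. fold (zs' x) in H2.
  destruct (Rle_dec x 1) as [h1|h1].
  - assert (Ec : zc x = (x + 1) / 2).
    { unfold zc. rewrite Rmin_left by nra. rewrite Rmax_right by lra. auto. }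
    assert (Ec' : zc' x = (x + 1) / 2). { unfold zc'. rewrite Rmin_right by lra. auto. }
    assert (Ey : zy x = 1). { unfold zy. rewrite Rmax_left by lra. auto. }
    assert (Es : zs' x = zs x). { unfold zs, zs'. rewrite Ec, Ec'. auto. }
    rewrite Ey, Es, Ec'. rewrite Ec in H1.
    transitivity ((2 * ((x + 1) / 2) - 1) ^ 2 * (((x + 1) / 2) ^ 2 + zs x ^ 2)). rewrite Ec. ring.
    rewrite H1. field.
  - destruct (Rle_dec x 3) as [h3|h3].
    + assert (Ec : zc x = (5 - x ^ 2) / 4).
      { unfold zc. rewrite Rmin_right by nra. rewrite Rmax_right by nra. auto. }
      assert (Ec' : zc' x = 1). { unfold zc'. rewrite Rmin_left by lra. auto. }
      assert (Ey : zy x = 1). { unfold zy. rewrite Rmax_left by lra. auto. }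
      assert (Es : zs' x = 0). { unfold zs'. rewrite Ec'. replace (1 - 1 ^ 2) with 0 by ring. apply sqrt_0. }
      rewrite Ey, Es, Ec'. rewrite Ec in H1 |- *.
      transitivity (5 - 4 * ((5 - x ^ 2) / 4) + (((5 - x ^ 2) / 4) ^ 2 + zs x ^ 2 - 1)). ring.
      rewrite H1. field.
    + assert (Ec : zc x = -1).
      { unfold zc. rewrite Rmin_right by nra. rewrite Rmax_left by nra. auto. }
      assert (Ec' : zc' x = 1). { unfold zc'. rewrite Rmin_left by lra. auto. }
      assert (Ey : zy x = x - 2). { unfold zy. rewrite Rmax_right by lra. auto. }
      assert (Es : zs' x = 0). { unfold zs'. rewrite Ec'. replace (1 - 1 ^ 2) with 0 by ring. apply sqrt_0. }
      assert (Es2 : zs x = 0). { unfold zs. rewrite Ec. replace (1 - (-1) ^ 2) with 0 by ring. apply sqrt_0. }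
      rewrite Ey, Es, Es2, Ec', Ec. ring.
Qed.

Lemma zig_init : zc 1 = 1 /\ zc' 1 = 1 /\ zs 1 = 0 /\ zs' 1 = 0 /\ zy 1 = 1.
Proof.
  assert (zc 1 = 1). { unfold zc. rewrite Rmin_left by lra. replace ((1+1)/2) with 1 by field. rewrite Rmax_right; lra. }
  assert (zc' 1 = 1). { unfold zc'. replace ((1+1)/2) with 1 by field. rewrite Rmin_left; lra. }
  unfold zs, zs'. rewrite H, H0. replace (1 - 1 ^ 2) with 0 by ring. rewrite sqrt_0.
  repeat split; auto. unfold zy. rewrite Rmax_left; lra.
Qed.

Lemma c01_zc x : cont01 x -> cont01 (fun t => zc (x t)).
Proof. intros. unfold zc. apply c01_max. apply c01_const. apply c01_min.
  apply c01_div. apply c01_plus; auto; apply c01_const. apply c01_const. intros; lra.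
  apply c01_div. apply c01_minus. apply c01_const. apply c01_pow2; auto. apply c01_const. intros; lra. Qed.
Lemma c01_zc' x : cont01 x -> cont01 (fun t => zc' (x t)).
Proof. intros. unfold zc'. apply c01_min. apply c01_const.
  apply c01_div. apply c01_plus; auto; apply c01_const. apply c01_const. intros; lra. Qed.
Lemma c01_zs x : cont01 x -> (forall t, D01 t -> 0 <= x t) -> cont01 (fun t => zs (x t)).
Proof. intros. unfold zs. apply c01_sqrt. apply c01_minus. apply c01_const. apply c01_pow2, c01_zc; auto.
  intros; apply sq_1m, zc_bound; auto. Qed.
Lemma c01_zs' x : cont01 x -> (forall t, D01 t -> 0 <= x t) -> cont01 (fun t => zs' (x t)).
Proof. intros. unfold zs'. apply c01_sqrt. apply c01_minus. apply c01_const. apply c01_pow2, c01_zc'; auto.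
  intros; apply sq_1m, zc'_bound; auto. Qed.

Lemma glue_at0 nA qA qB c s : glue nA qA qB c s 0%nat = qA 0%nat.
Proof. unfold glue. rewrite leb_t by lia. auto. Qed.
Lemma glue_at nA qA qB c s i : (nA < i)%nat -> glue nA qA qB c s i = vadd (qA nA) (rot c s (vsub (qB (i - nA)%nat) (qB 0%nat))).
Proof. intros. unfold glue. rewrite leb_f by lia. auto. Qed.

Lemma nsq_rotcoef A B u : nsq (rot A B u) = (A ^ 2 + B ^ 2) * nsq u.
Proof. unfold nsq, rot; cbn [fst snd]; ring. Qed.

Lemma step3 n : (3 <= n)%nat -> LiftProp (n - 2) ->
  forall l p alpha, (forall i, (i < n)%nat -> 0 < l i) -> inC n l p -> cont01 alpha ->
  (forall t, 0 <= t <= 1 -> mr n l <= alpha t <= Lsum n l) -> alpha 0 = theta n p ->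
  p 1%nat = p n -> p (n - 1)%nat = p 0%nat ->
  exists q : R -> config, (forall t, 0 <= t <= 1 -> inC n l (q t)) /\
    (forall i, (i <= n)%nat -> q 0 i = p i) /\ (forall i, (i <= n)%nat -> pc (fun t => q t i)) /\
    (forall t, 0 <= t <= 1 -> theta n (q t) = alpha t).
Proof.
  intros Hn IHM l p alpha Hl Hp Hal Hr H0 E1 E2.
  set (U := vsub (p n) (p 0%nat)). set (d := nrm U).
  assert (Hl0 : l 0%nat = d).
  { rewrite <- (Hp 0%nat) by lia. rewrite dist2_nrm, E1. auto. }
  assert (Hd : 0 < d) by (rewrite <- Hl0; apply Hl; lia).
  assert (Hln1 : l (n - 1)%nat = d).
  { rewrite <- (Hp (n - 1)%nat) by lia. replace (S (n - 1)) with n by lia. rewrite dist2_nrm, E2. auto. }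
  assert (Hth : theta n p = d) by (apply theta_nrm).
  set (nM := (n - 2)%nat) in *. set (lM := shiftl 1 l). set (pM := shiftp 1 p).
  assert (HlM : forall i, (i < nM)%nat -> 0 < lM i) by (intros; unfold lM, shiftl; apply Hl; unfold nM in *; lia).
  assert (HpM : inC nM lM pM).
  { apply (inC_prefix (n - 1) nM). unfold nM; lia. apply inC_suffix; auto; lia. }
  assert (HthM : theta nM pM = d).
  { unfold pM. rewrite theta_shift. replace (nM + 1)%nat with (n - 1)%nat by (unfold nM; lia).
    rewrite E2, E1. apply nrm_eq_nsq. unfold U, nsq, vsub; cbn [fst snd]; ring. }
  pose proof (theta_range nM lM pM HlM HpM) as HrM. rewrite HthM in HrM.
  set (LM := Lsum nM lM) in *. set (mM := mr nM lM) in *.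
  assert (HLs : Lsum n l = 2 * d + LM).
  { replace n with (S (1 + nM)) at 1 by (unfold nM; lia). cbn [Lsum]. rewrite Lsum_add.
    replace (l (1 + nM)%nat) with (l (n - 1)%nat) by (f_equal; unfold nM; lia).
    rewrite Hln1. simpl. rewrite Hl0. unfold LM, lM. ring. }
  assert (Hmn := mr_bounds n l Hl).
  assert (Hapos : forall t, D01 t -> 0 <= alpha t <= 2 * d + LM) by (intros t Ht; specialize (Hr t Ht); lra).
  set (b2 := fun t => Rmax d (alpha t - 2 * d)).
  assert (Hb20 : b2 0 = d) by (unfold b2; rewrite H0, Hth; apply Rmax_left; lra).
  assert (B2 : forall t, D01 t -> d <= b2 t <= LM).
  { intros t Ht. specialize (Hapos t Ht). unfold b2. split. apply Rmax_l. apply Rmax_lub; lra. }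
  assert (Cb2 : cont01 b2) by (unfold b2; apply c01_max; [apply c01_const|apply c01_minus; auto; apply c01_const]).
  destruct (IHM lM pM b2) as [qM [QM1 [QM2 [QM3 QM4]]]]; auto.
  { intros t Ht. specialize (B2 t Ht). change (mM <= b2 t <= LM). lra. }
  { rewrite Hb20; auto. }
  set (x := fun t => alpha t / d).
  assert (Hx : forall t, D01 t -> 0 <= x t) by (intros t Ht; unfold x; apply Rmult_le_pos; [apply Hapos; auto|apply Rlt_le, Rinv_0_lt_compat; lra]).
  assert (Cx : cont01 x) by (unfold x; apply c01_div; auto; [apply c01_const|intros; lra]).
  assert (Hb2y : forall t, b2 t = d * zy (x t)).
  { intros t. unfold b2, zy, x. rewrite <- RmaxRmult by lra. f_equal. ring. field. lra. }
  set (u := vscal (/ d) U).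
  assert (Hu : nsq u = 1) by (apply unit_of; auto).
  set (bV := fun t => vsub (qM t nM) (qM t 0%nat)).
  assert (HbV : forall t, D01 t -> nrm (bV t) = b2 t) by (intros; unfold bV; rewrite <- theta_nrm; auto).
  set (bh := fun t => vscal (/ b2 t) (bV t)).
  set (D := fun t => rot (- zc (x t)) (- zs (x t)) u).
  set (cr := fun t => dot (bh t) (D t)). set (sr := fun t => cross (bh t) (D t)).
  set (e1 := fun t => 2 * zc' (x t) ^ 2 - 1). set (e2 := fun t => 2 * zc' (x t) * zs' (x t)).
  assert (HD : forall t, D01 t -> nsq (D t) = 1).
  { intros t Ht. unfold D. rewrite nsq_rot, Hu. auto.
    replace ((- zc (x t)) ^ 2 + (- zs (x t)) ^ 2) with (zc (x t) ^ 2 + zs (x t) ^ 2) by ring.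
    apply csq, zc_bound; auto. }
  assert (Hbh : forall t, D01 t -> nsq (bh t) = 1).
  { intros t Ht. apply unit_of; auto. specialize (B2 t Ht); lra. }
  assert (HR : forall t, D01 t -> cr t ^ 2 + sr t ^ 2 = 1).
  { intros t Ht. unfold cr, sr. rewrite lagrange, HD, Hbh; auto; ring. }
  assert (He : forall t, D01 t -> e1 t ^ 2 + e2 t ^ 2 = 1).
  { intros t Ht. unfold e1, e2. pose proof (csq (zc' (x t)) (zc'_bound _ (Hx t Ht))).
    fold (zs' (x t)) in H.
    transitivity (1 + 4 * zc' (x t) ^ 2 * (zc' (x t) ^ 2 + zs' (x t) ^ 2 - 1)). ring. rewrite H; ring. }
  set (qC := shiftp (n - 1) p).
  set (G1 := fun t => glue 1 p (qM t) (cr t) (sr t)).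
  exists (fun t => glue (n - 1) (G1 t) qC (e1 t) (e2 t)).
  split; [|split; [|split]].
  - intros t Ht.
    assert (I1 := glue_inC 1 nM l p (qM t) (cr t) (sr t) (HR t Ht) (inC_prefix n 1 l p ltac:(lia) Hp) (QM1 t Ht)).
    replace (1 + nM)%nat with (n - 1)%nat in I1 by (unfold nM; lia).
    assert (I2 := inC_suffix n (n - 1) l p ltac:(lia) Hp).
    replace (n - (n - 1))%nat with 1%nat in I2 by lia.
    assert (I3 := glue_inC (n - 1) 1 l (G1 t) qC (e1 t) (e2 t) (He t Ht) I1 I2).
    replace (n - 1 + 1)%nat with n in I3 by lia. exact I3.
  - assert (Ex0 : x 0 = 1) by (unfold x; rewrite H0, Hth; field; lra).
    destruct zig_init as [Z1 [Z2 [Z3 [Z4 Z5]]]].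
    assert (Hbh0 : bh 0 = vscal (-1) u).
    { unfold bh, bV. rewrite Hb20, !QM2 by lia. unfold pM, shiftp, u, U. 
      replace (nM + 1)%nat with (n - 1)%nat by (unfold nM; lia). simpl (0 + 1)%nat. rewrite E2, E1.
      unfold vscal, vsub; cbn [fst snd]; f_equal; field; lra. }
    assert (HD0 : D 0 = vscal (-1) u).
    { unfold D. rewrite Ex0, Z1, Z3. unfold rot, vscal; cbn [fst snd]; f_equal; ring. }
    assert (Hcr0 : cr 0 = 1). { unfold cr. rewrite Hbh0, HD0. rewrite <- Hu. unfold dot, nsq, vscal; cbn [fst snd]; ring. }
    assert (Hsr0 : sr 0 = 0). { unfold sr. rewrite Hbh0, HD0. unfold cross, vscal; cbn [fst snd]; ring. }
    assert (He10 : e1 0 = 1). { unfold e1. rewrite Ex0, Z2; ring. }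
    assert (He20 : e2 0 = 0). { unfold e2. rewrite Ex0, Z4; ring. }
    assert (G10 : forall i, (i <= n - 1)%nat -> G1 0 i = p i).
    { intros i Hi. unfold G1. rewrite Hcr0, Hsr0. apply (glue_id 1 nM p p (qM 0)).
      intros; reflexivity. intros k Hk. rewrite QM2 by lia. unfold pM, shiftp. auto. unfold nM; lia. }
    intros i Hi. rewrite He10, He20. apply (glue_id (n - 1) 1 p (G1 0) qC). exact G10. intros k Hk; unfold qC, shiftp; auto. lia.
  - intros i Hi.
    assert (Cbh : pc bh).
    { unfold bh. apply pc_scal. apply c01_inv; auto. intros t Ht; specialize (B2 t Ht); lra.
      unfold bV. apply pc_sub; apply QM3; lia. }
    assert (CD : pc D).
    { unfold D. apply pc_rot. apply c01_opp, c01_zc; auto. apply c01_opp, c01_zs; auto. apply pc_const. }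
    apply (glue_pc (n - 1) 1 G1 (fun _ => qC)).
    + intros k Hk. unfold G1. apply (glue_pc 1 nM (fun _ => p) qM).
      intros; apply pc_const. auto. apply c01_dot; auto. apply c01_cross; auto. unfold nM; lia.
    + intros; apply pc_const.
    + unfold e1. apply c01_minus. apply c01_scal, c01_pow2, c01_zc'; auto. apply c01_const.
    + unfold e2. apply c01_mult. apply c01_scal, c01_zc'; auto. apply c01_zs'; auto.
    + lia.
  - intros t Ht.
    assert (ET : theta n (glue (n - 1) (G1 t) qC (e1 t) (e2 t)) = theta (n - 1 + 1) (glue (n - 1) (G1 t) qC (e1 t) (e2 t)))
      by (f_equal; lia).
    rewrite ET, glue_theta by lia.
    unfold G1. rewrite glue_at0, glue_at by lia.
    replace (n - 1 - 1)%nat with nM by (unfold nM; lia).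
    unfold qC, shiftp. simpl (0 + (n - 1))%nat. simpl (1 + (n - 1))%nat. replace (S (n - 1)) with n by lia.
    rewrite E1, E2. fold (bV t). fold U.
    assert (EbV : bV t = vscal (b2 t) (bh t)).
    { unfold bh. rewrite vscal_scal, Rinv_r, vscal1; auto. specialize (B2 t Ht); lra. }
    rewrite EbV, rot_scal. unfold cr, sr. rewrite rot_dc, Hbh, vscal1 by auto.
    assert (EU : U = vscal d u) by (unfold u; rewrite vscal_scal, Rinv_r, vscal1; auto; lra).
    assert (VS : forall a X b, vsub (vadd a X) b = vadd (vsub a b) X) by (intros; unfold vsub, vadd; cbn [fst snd]; f_equal; ring).
    rewrite VS. fold U. rewrite EU. unfold D. rewrite Hb2y.
    apply nrm_eq. apply Hapos; auto.
    transitivity (nsq (rot (d * (1 - zy (x t) * zc (x t) + e1 t)) (d * (- zy (x t) * zs (x t) + e2 t)) u)).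
    { apply f_equal. unfold rot, vadd, vsub, vscal; cbn [fst snd]. unfold e1, e2. f_equal; ring. }
    rewrite nsq_rotcoef, Hu. unfold e1, e2.
    transitivity (d ^ 2 * ((1 - zy (x t) * zc (x t) + (2 * zc' (x t) ^ 2 - 1)) ^ 2 +
                           (- zy (x t) * zs (x t) + 2 * zc' (x t) * zs' (x t)) ^ 2)). ring.
    rewrite zig_alg by auto. unfold x. field. lra.
Qed.

Lemma dist2_self x : dist2 x x = 0.
Proof. unfold dist2. replace ((fst x - fst x) ^ 2 + (snd x - snd x) ^ 2) with 0 by ring. apply sqrt_0. Qed.

Lemma lift_all : forall N n, (1 <= n <= N)%nat -> LiftProp n.
Proof.
  induction N; intros n Hn; [lia|].
  destruct (Nat.eq_dec n 1) as [->|Hn1]; [apply lift1|].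
  intros l p alpha Hl Hp Hal Hr H0.
  destruct (classic (exists j, (1 <= j < n)%nat /\ p j <> p 0%nat /\ p j <> p n)) as [[j [Hj [A B]]]|Hno].
  - apply (step2 n j); auto; try lia; apply IHN; lia.
  - assert (Hall : forall j, (1 <= j < n)%nat -> p j = p 0%nat \/ p j = p n).
    { intros j Hj. destruct (classic (p j = p 0%nat)); auto. destruct (classic (p j = p n)); auto.
      exfalso; apply Hno; exists j; auto. }
    assert (P1 : p 1%nat <> p 0%nat).
    { intros E. pose proof (Hp 0%nat ltac:(lia)). rewrite E, dist2_self in H. pose proof (Hl 0%nat ltac:(lia)). lra. }
    assert (P2 : p (n - 1)%nat <> p n).
    { intros E. pose proof (Hp (n - 1)%nat ltac:(lia)). replace (S (n - 1)) with n in H by lia.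
      rewrite E, dist2_self in H. pose proof (Hl (n - 1)%nat ltac:(lia)). lra. }
    assert (E1 : p 1%nat = p n) by (destruct (Hall 1%nat ltac:(lia)); tauto).
    assert (E2 : p (n - 1)%nat = p 0%nat) by (destruct (Hall (n - 1)%nat ltac:(lia)); tauto).
    assert (Hn3 : (3 <= n)%nat).
    { destruct (Nat.eq_dec n 2) as [->|]; [|lia]. exfalso. simpl in E2. rewrite E2 in E1. auto. }
    apply (step3 n); auto. apply IHN; lia.
Qed.

Theorem mainTheorem9 (k : nat) (l : nat -> R) (p : config) (alpha : R -> R) :
  (2 <= k)%nat ->
  (forall i, (i < k)%nat -> 0 < l i) ->
  inC k l p ->
  cont01 alpha ->
  (forall t, 0 <= t <= 1 -> range_P k l (alpha t)) ->
  alpha 0 = theta k p ->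
  exists alt : R -> config,
    contM k l alt /\ congruent k p (alt 0) /\
    (forall t, 0 <= t <= 1 -> theta k (alt t) = alpha t).
Proof.
  intros Hk Hl Hp Hal Hr H0.
  destruct (lift_all k k ltac:(lia) l p alpha) as [q [Q1 [Q2 [Q3 Q4]]]]; auto.
  { intros t Ht. apply range_iff; auto. }
  exists q. split; [|split].
  - apply coord_contM; auto.
  - exists 1, 0, 0, 0. split; [ring|]. intros i Hi. rewrite Q2 by auto.
    unfold se2_act. destruct (p i); cbn [fst snd]. f_equal; ring.
  - auto.
Qed.
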